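(* In the standing setting below, assume $A$ has full column rank and that $(w_t,Q_t)_{t=1}^T$ is a quadrature rule on $\mathrm{SO}(d+1)$ with positive weights and degree of accuracy $n\ge K$. Let $P_A=\sum_j(\beta_{\mathrm{aug}})_j\varphi_j$, where $\beta_{\mathrm{aug}}$ minimises $L_{\mathrm{aug}}$. Then $P_A$ is exactly rotation invariant: $\varepsilon_{\mathrm{sym}}(P_A)=0$.
   Context: $S^{N,d}=(S^d)^N$ with $L^2$ taken w.r.t. the product of normalised uniform surface measures; $Q\in\mathrm{SO}(d+1)$ acts elementwise, $Q\cdot(\mathbf r_1,\dots,\mathbf r_N)=(Q\mathbf r_1,\dots,Q\mathbf r_N)$. $V^{N,d}_K$: restrictions to $S^{N,d}$ of complex polynomials of total degree $\le K$ in Cartesian coordinates; $B^{N,d}_K$: its rotation-invariant subspace. Fix an orthonormal basis $\varphi_1,\dots,\varphi_m$ of $V^{N,d}_K$ with $\varphi_1,\dots,\varphi_{m_{\mathrm I}}$ a basis of $B^{N,d}_K$ and the rest a basis of its orthogonal complement. Data: points $R_1,\dots,R_n\in S^{N,d}$, a rotation-invariant target $f$, $Y_i=f(R_i)$; design matrix $A_{ij}=\varphi_j(R_i)$; $(A\circ Q)_{ij}=\varphi_j(Q\cdot R_i)$. Augmentation parameters: weights $w_1,\dots,w_T$ with $\sum_tw_t=1$ and rotations $Q_1,\dots,Q_T$; the augmented loss is $L_{\mathrm{aug}}(\beta)=\frac12\sum_tw_t\|(A\circ Q_t)\beta-Y\|^2$. A quadrature rule $(w_t,Q_t)_{t=1}^T$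 on $\mathrm{SO}(d+1)$ has degree of accuracy $n$ if $\sum_tw_tp(Q_t)=\int_{\mathrm{SO}(d+1)}p\,dH$ for every polynomial $p$ of degree $\le n$ in the matrix entries of $Q$, where $H$ is the normalised Haar measure. $\varepsilon_{\mathrm{sym}}(g)=\|g-\mathrm{sym}(g)\|_{L^2}$ with $\mathrm{sym}$ the $L^2$-orthogonal projection onto rotation-invariant functions. *)

(* Defs.v *)
From HB Require Import structures.
From mathcomp Require Import all_boot all_order all_algebra.
From mathcomp Require Import all_classical all_reals all_analysis.
From mathcomp Require Import complex.

Unset Implicit Arguments.
Unset Strict Implicit.
Unset Printing Implicit Defensive.

Import Order.TTheory GRing.Theory Num.Theory.
Import numFieldNormedType.Exports.

Local Open Scope classical_set_scope.
Local Open Scope ring_scope.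
Local Open Scope complex_scope.

Section Setting.
Variable R : realType.

(* Ambient spaces.  A point of S^{N,d} = (S^d)^N is represented as an  *)
(* N x (d+1) real matrix whose i-th row is r_i; a point of S^d is a    *)
(* 1 x (d+1) row.  Rotations Q in SO(d+1) act on a row r by r |-> Q r  *)
(* (column convention), i.e. r^T |-> r^T Q^T; on S^{N,d} elementwise:  *)
(* M |-> M Q^T.                                                       *)

(* Borel sigma-algebra on real a x b matrices (= Borel sets of R^(ab)),  *)
(* generated by the coordinate maps.                                    *)
Definition coord_sets (a b : nat) : set (set (matrix R a b)) :=
  [set A | exists (i : 'I_a) (j : 'I_b) (B : set R),
     measurable B /\ A = (fun M : (matrix R a b) => M i j) @^-1` B].

Local Notation Mx a b := (g_sigma_algebraType (coord_sets a b)).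

Definition SOset (k : nat) : set (matrix R k k) :=
  [set Q | Q^T *m Q = 1%:M /\ \det Q = 1].

Definition sphere (k : nat) : set (matrix R 1 k) :=
  [set r | \sum_j r 0 j ^+ 2 = 1].

Definition sphereN (N k : nat) : set (matrix R N k) :=
  [set M | forall i : 'I_N, row i M \in sphere k].

Definition rot (N k : nat) (Q : (matrix R k k)) (M : (matrix R N k)) : (matrix R N k) :=
  M *m Q^T.

Definition is_Haar (k : nat) (H : {measure set (Mx k k) -> \bar R}) : Prop :=
  [/\ H setT = 1%E,
      H (~` (SOset k : set (Mx k k))) = 0%E &
      forall (Q : (matrix R k k)) (A : set (Mx k k)), Q \in SOset k -> measurable A ->
        H ((fun M : Mx k k => (Q *m M : Mx k k)) @^-1` A) = H A].

Definition is_unif_sphere (k : nat) (sigma : {measure set (Mx 1 k) -> \bar R})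
  : Prop :=
  [/\ sigma setT = 1%E,
      sigma (~` (sphere k : set (Mx 1 k))) = 0%E &
      forall (Q : (matrix R k k)) (A : set (Mx 1 k)), Q \in SOset k -> measurable A ->
        sigma ((fun r : Mx 1 k => (r *m Q^T : Mx 1 k)) @^-1` A) = sigma A].

Definition is_product_measure (N k : nat) (sigma : {measure set (Mx 1 k) -> \bar R})
  (mu : {measure set (Mx N k) -> \bar R}) : Prop :=
  forall A : 'I_N -> set (Mx 1 k), (forall i, measurable (A i)) ->
    mu [set M : Mx N k | forall i, A i (row i M)] = (\prod_i sigma (A i))%E.

Definition mxmono {T : comPzRingType} (a b : nat) (alpha : 'I_a -> 'I_b -> nat)
  (M : (matrix T a b)) : T := \prod_i \prod_j M i j ^+ alpha i j.

Definition mdeg (a b : nat) (alpha : 'I_a -> 'I_b -> nat) : nat :=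
  (\sum_i \sum_j alpha i j)%N.

Definition mxpoly_eval {T : comPzRingType} (a b : nat)
  (s : seq (T * ('I_a -> 'I_b -> nat))) (M : (matrix T a b)) : T :=
  \sum_(x <- s) x.1 * mxmono a b x.2 M.

Definition is_mx_poly (k n : nat) (p : (matrix R k k) -> R) : Prop :=
  exists s : seq (R * ('I_k -> 'I_k -> nat)),
    all (fun x => (mdeg k k x.2 <= n)%N) s /\ forall Q, p Q = mxpoly_eval k k s Q.

Definition quadrature_exact (k T n : nat) (H : {measure set (Mx k k) -> \bar R})
  (w : 'I_T -> R) (Q : 'I_T -> (matrix R k k)) : Prop :=
  forall p : (matrix R k k) -> R, is_mx_poly k n p ->
    ((\sum_t w t * p (Q t))%:E =
      \int[H]_(M in (SOset k : set (Mx k k))) (p M)%:E)%E.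

Definition cmx (a b : nat) (M : (matrix R a b)) : (matrix R[i] a b) :=
  map_mx (fun x => x%:C) M.

Definition inV (N k K : nat) (g : (matrix R N k) -> R[i]) : Prop :=
  exists s : seq (R[i] * ('I_N -> 'I_k -> nat)),
    all (fun x => (mdeg N k x.2 <= K)%N) s /\
    forall M, M \in sphereN N k -> g M = mxpoly_eval N k s (cmx N k M).

Definition rot_inv (N k : nat) (g : (matrix R N k) -> R[i]) : Prop :=
  forall Q M, Q \in SOset k -> M \in sphereN N k -> g (rot N k Q M) = g M.

Definition inB (N k K : nat) (g : (matrix R N k) -> R[i]) : Prop :=
  inV N k K g /\ rot_inv N k g.

Definition sqmod (z : R[i]) : R := complex.Re z ^+ 2 + complex.Im z ^+ 2.

Definition cint (N k : nat) (mu : {measure set (Mx N k) -> \bar R})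
  (g : (matrix R N k) -> R[i]) : R[i] :=
  (Rintegral mu (sphereN N k : set (Mx N k)) (fun M => complex.Re (g M)))
  +i* (Rintegral mu (sphereN N k : set (Mx N k)) (fun M => complex.Im (g M))).

Definition l2inner (N k : nat) (mu : {measure set (Mx N k) -> \bar R})
  (f g : (matrix R N k) -> R[i]) : R[i] :=
  cint N k mu (fun M => f M * (g M)^*).

Definition l2sq (N k : nat) (mu : {measure set (Mx N k) -> \bar R})
  (g : (matrix R N k) -> R[i]) : \bar R :=
  (\int[mu]_(M in (sphereN N k : set (Mx N k))) (sqmod (g M))%:E)%E.

Definition esqrt (x : \bar R) : \bar R :=
  match x with
  | EFin r => (Num.sqrt r)%:E
  | _ => x
  end.

Definition inv_L2 (N k : nat) (mu : {measure set (Mx N k) -> \bar R})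
  (h : (matrix R N k) -> R[i]) : Prop :=
  [/\ measurable_fun (sphereN N k : set (Mx N k)) (fun M : Mx N k => complex.Re (h M)),
      measurable_fun (sphereN N k : set (Mx N k)) (fun M : Mx N k => complex.Im (h M)),
      (l2sq N k mu h < +oo)%E &
      rot_inv N k h].

(* eps_sym(g) = || g - sym(g) ||_{L^2}, sym(g) being the orthogonal  *)
(* projection onto the (closed) subspace of rotation-invariant functions, *)
(* i.e. the distance from g to that subspace.                         *)
Definition eps_sym (N k : nat) (mu : {measure set (Mx N k) -> \bar R})
  (g : (matrix R N k) -> R[i]) : \bar R :=
  ereal_inf [set esqrt (l2sq N k mu (fun M => g M - h M)) | h in inv_L2 N k mu].

Definition design (N k n m : nat) (phi : 'I_m -> (matrix R N k) -> R[i])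
  (Rp : 'I_n -> (matrix R N k)) (Q : (matrix R k k)) : (matrix R[i] n m) :=
  \matrix_(i, j) phi j (rot N k Q (Rp i)).

Definition sqnorm (n : nat) (v : (matrix R[i] n 1)) : R := \sum_i sqmod (v i 0).

Definition L_aug (N k n m T : nat) (phi : 'I_m -> (matrix R N k) -> R[i])
  (Rp : 'I_n -> (matrix R N k)) (Y : (matrix R[i] n 1))
  (w : 'I_T -> R) (Q : 'I_T -> (matrix R k k)) (beta : (matrix R[i] m 1)) : R :=
  2^-1 * \sum_t w t * sqnorm n (design N k n m phi Rp (Q t) *m beta - Y).

Definition fexpand (N k m : nat) (phi : 'I_m -> (matrix R N k) -> R[i])
  (beta : (matrix R[i] m 1)) : (matrix R N k) -> R[i] :=
  fun M => \sum_j beta j 0 * phi j M.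

End Setting.

Notation Mx R a b := (g_sigma_algebraType (coord_sets R a b)).

(* Main.v *)
Require Import Defs.
From HB Require Import structures.
From mathcomp Require Import all_boot all_order all_algebra.
From mathcomp Require Import all_classical all_reals all_analysis.
From mathcomp Require Import complex.
From mathcomp Require Import ring lra measurable_realfun.
Import Order.TTheory GRing.Theory Num.Theory.
Import numFieldNormedType.Exports.
Local Open Scope classical_set_scope.
Local Open Scope ring_scope.
Local Open Scope complex_scope.


Set Implicit Arguments.
Unset Strict Implicit.


Set Implicit Arguments.
Unset Strict Implicit.

Section PolyAlg.
Variable T : comPzRingType.

Definition polyfun (a b n : nat) (F : matrix T a b -> T) :=
  exists s : seq (T * ('I_a -> 'I_b -> nat)),
    all (fun x => (mdeg a b x.2 <= n)%N) s /\ forall M, F M = mxpoly_eval a b s M.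
Arguments polyfun : clear implicits.

Lemma polyfun_le a b n n' F : (n <= n')%N -> polyfun a b n F -> polyfun a b n' F.
Proof.
move=> le [s [hs e]]; exists s; split => //.
by apply/allP => x /(allP hs) /= h; exact: leq_trans h le.
Qed.

Lemma polyfun_ext a b n F G : (forall M, F M = G M) -> polyfun a b n F -> polyfun a b n G.
Proof. by move=> e [s [hs h]]; exists s; split=> // M; rewrite -e. Qed.

Lemma polyfun_const a b c : polyfun a b 0 (fun _ => c).
Proof.
exists [:: (c, fun _ _ => 0%N)]; split.
  by rewrite /= andbT /mdeg big1 // => i _; rewrite big1.
move=> M; rewrite /mxpoly_eval big_cons big_nil addr0 /= /mxmono.
by rewrite big1 ?mulr1 // => i _; rewrite big1 // => j _; rewrite expr0.
Qed.

Lemma polyfun_add a b n F G : polyfun a b n F -> polyfun a b n G ->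
  polyfun a b n (fun M => F M + G M).
Proof.
move=> [s [hs e]] [t [ht f]]; exists (s ++ t); split.
  by rewrite all_cat hs ht.
by move=> M; rewrite e f /mxpoly_eval big_cat.
Qed.

Lemma mxmonoD a b (al be : 'I_a -> 'I_b -> nat) (M : matrix T a b) :
  mxmono a b (fun i j => al i j + be i j)%N M = mxmono a b al M * mxmono a b be M.
Proof.
rewrite /mxmono -big_split /=; apply: eq_bigr => i _.
by rewrite -big_split /=; apply: eq_bigr => j _; rewrite exprD.
Qed.

Lemma mdegD a b (al be : 'I_a -> 'I_b -> nat) :
  mdeg a b (fun i j => al i j + be i j)%N = (mdeg a b al + mdeg a b be)%N.
Proof.
rewrite /mdeg -big_split /=; apply: eq_bigr => i _.
by rewrite -big_split.
Qed.

Lemma polyfun_mul a b n m F G : polyfun a b n F -> polyfun a b m G ->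
  polyfun a b (n + m) (fun M => F M * G M).
Proof.
move=> [s [hs e]] [t [ht f]].
exists [seq (x.1 * y.1, fun i j => (x.2 i j + y.2 i j)%N) | x <- s, y <- t]; split.
  apply/allP => z /allpairsP [[x y] [xs yt ->]] /=.
  by rewrite mdegD leq_add // ?(allP hs x xs) ?(allP ht y yt).
move=> M; rewrite e f /mxpoly_eval big_allpairs_dep big_distrl /=.
apply: eq_bigr => x _; rewrite big_distrr /=; apply: eq_bigr => y _.
by rewrite mxmonoD; ring.
Qed.

Lemma polyfun_scale a b n c F : polyfun a b n F -> polyfun a b n (fun M => c * F M).
Proof. by move=> h; have := @polyfun_mul a b 0 n _ _ (polyfun_const a b c) h. Qed.

Lemma polyfun_coord a b (i : 'I_a) (j : 'I_b) : polyfun a b 1 (fun M => M i j).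
Proof.
exists [:: (1, fun i' j' => ((i' == i) && (j' == j) : nat))]; split.
  rewrite /= andbT /mdeg (bigD1 i) //=.
  rewrite [X in (_ + X)%N](_ : _ = 0%N); last first.
    by apply: big1 => i' /negbTE hi; apply: big1 => j' _; rewrite hi.
  rewrite addn0 (bigD1 j) //= !eqxx.
  rewrite [X in (_ + X)%N](_ : _ = 0%N) //.
  by apply: big1 => j' /negbTE ->; rewrite andbF.
move=> M; rewrite /mxpoly_eval big_cons big_nil addr0 /= mul1r /mxmono.
rewrite (bigD1 i) //=.
rewrite [X in _ * X](_ : _ = 1); last first.
  by apply: big1 => i' /negbTE hi; apply: big1 => j' _; rewrite hi expr0.
rewrite mulr1 (bigD1 j) //= !eqxx expr1.
rewrite [X in _ * X](_ : _ = 1) ?mulr1 //.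
by apply: big1 => j' /negbTE ->; rewrite andbF expr0.
Qed.

Lemma polyfun_sum_seq a b n (I : Type) (r : seq I) (F : I -> matrix T a b -> T) :
  (forall i, polyfun a b n (F i)) -> polyfun a b n (fun M => \sum_(i <- r) F i M).
Proof.
move=> h; elim: r => [|x r IH].
  by apply: (polyfun_ext (F := fun _ => 0)); [move=> M; rewrite big_nil|
    exact: polyfun_le (polyfun_const _ _ _)].
apply: (polyfun_ext (F := fun M => F x M + \sum_(i <- r) F i M)).
  by move=> M; rewrite big_cons.
exact: polyfun_add.
Qed.

Lemma polyfun_sum a b n (I : finType) (F : I -> matrix T a b -> T) :
  (forall i, polyfun a b n (F i)) -> polyfun a b n (fun M => \sum_i F i M).
Proof. exact: polyfun_sum_seq. Qed.

Lemma polyfun_prod_seq a b (I : Type) (r : seq I) (n : I -> nat) (F : I -> matrix T a b -> T) :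
  (forall i, polyfun a b (n i) (F i)) ->
  polyfun a b (\sum_(i <- r) n i) (fun M => \prod_(i <- r) F i M).
Proof.
move=> h; elim: r => [|x r IH].
  by rewrite big_nil; apply: (polyfun_ext (F := fun _ => 1)); [move=> M; rewrite big_nil|
    exact: polyfun_const].
rewrite big_cons; apply: (polyfun_ext (F := fun M => F x M * \prod_(i <- r) F i M)).
  by move=> M; rewrite big_cons.
exact: polyfun_mul.
Qed.

Lemma polyfun_exp a b n k F : polyfun a b n F -> polyfun a b (k * n) (fun M => F M ^+ k).
Proof.
move=> h; elim: k => [|k IH].
  by apply: (polyfun_ext (F := fun _ => 1)); [move=> M; rewrite expr0|exact: polyfun_const].
rewrite mulSn; apply: (polyfun_ext (F := fun M => F M * F M ^+ k)).
  by move=> M; rewrite exprS.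
exact: polyfun_mul.
Qed.

Lemma polyfun_comp a b c e n (F : matrix T a b -> T) (G : matrix T c e -> matrix T a b) :
  polyfun a b n F -> (forall i j, polyfun c e 1 (fun X => G X i j)) ->
  polyfun c e n (fun X => F (G X)).
Proof.
move=> [s [hs eF]] hG.
apply: (polyfun_ext (F := fun X => \sum_(x <- s) x.1 * mxmono a b x.2 (G X))).
  by move=> X; rewrite eF.
elim: s hs {eF} => [|x s IH] /=.
  by move=> _; apply: (polyfun_ext (F := fun _ => 0)); [move=> M; rewrite big_nil|
    exact: polyfun_le (polyfun_const _ _ _)].
move=> /andP[hx hs].
apply: (polyfun_ext (F := fun X => x.1 * mxmono a b x.2 (G X) +
   \sum_(y <- s) y.1 * mxmono a b y.2 (G X))).
  by move=> X; rewrite big_cons.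
apply: polyfun_add; last exact: IH.
apply: polyfun_scale; apply: (polyfun_le hx).
rewrite /mdeg /mxmono; apply: polyfun_prod_seq => i.
apply: polyfun_prod_seq => j.
by have := polyfun_exp (x.2 i j) (hG i j); rewrite muln1.
Qed.

Lemma polyfun_lin c e (cf : 'I_c -> 'I_e -> T) :
  polyfun c e 1 (fun X => \sum_i \sum_j cf i j * X i j).
Proof.
apply: polyfun_sum => i; apply: polyfun_sum => j; apply: polyfun_scale.
exact: polyfun_coord.
Qed.

End PolyAlg.
Arguments polyfun {T} a b n F.


Set Implicit Arguments.
Set Implicit Arguments.
Unset Strict Implicit.

Section Geo.
Variable R : realType.

Lemma SO_orth k (Q : 'M[R]_k) : Q \in SOset R k -> Q^T *m Q = 1%:M /\ Q *m Q^T = 1%:M.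
Proof.
rewrite inE => -[h _]; split => //; exact: mulmx1C.
Qed.

Lemma rot_comp N k (Q Q' : 'M[R]_k) (M : 'M[R]_(N, k)) :
  Defs.rot R N k Q (Defs.rot R N k Q' M) = Defs.rot R N k (Q *m Q') M.
Proof. by rewrite /Defs.rot trmx_mul mulmxA. Qed.

Lemma rot1 N k (M : 'M[R]_(N, k)) : Defs.rot R N k 1%:M M = M.
Proof. by rewrite /Defs.rot trmx1 mulmx1. Qed.

Lemma sq_row k (r : 'M[R]_(1, k)) : \sum_j r 0 j ^+ 2 = (r *m r^T) 0 0.
Proof. by rewrite mxE; apply: eq_bigr => j _; rewrite mxE expr2. Qed.

Lemma rot_sphere N k (Q : 'M[R]_k) (M : 'M[R]_(N, k)) :
  Q \in SOset R k -> M \in sphereN R N k -> Defs.rot R N k Q M \in sphereN R N k.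
Proof.
move=> /SO_orth [h1 _]; rewrite !inE /sphereN /= => hM i.
have := hM i; rewrite !inE /sphere /= !sq_row /rot row_mul trmx_mul trmxK.
by rewrite -mulmxA (mulmxA Q^T) h1 mul1mx.
Qed.

Lemma SO_mul k (Q Q' : 'M[R]_k) : Q \in SOset R k -> Q' \in SOset R k ->
  Q *m Q' \in SOset R k.
Proof.
rewrite !inE => -[h1 d1] [h2 d2]; split.
  by rewrite trmx_mul -mulmxA (mulmxA Q^T) h1 mul1mx.
by rewrite det_mulmx d1 d2 mulr1.
Qed.

Lemma SO_tr k (Q : 'M[R]_k) : Q \in SOset R k -> Q^T \in SOset R k.
Proof.
move=> hQ; have [h1 h2] := SO_orth hQ; move: hQ; rewrite !inE => -[_ d].
by split; rewrite ?trmxK // det_tr.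
Qed.

Lemma SO1 k : (1%:M : 'M[R]_k) \in SOset R k.
Proof. by rewrite inE; split; rewrite ?trmx1 ?mulmx1 ?det1. Qed.

Lemma rot_inv_sphere N k (Q : 'M[R]_k) (M : 'M[R]_(N, k)) :
  Q \in SOset R k -> Defs.rot R N k Q (Defs.rot R N k Q^T M) = M.
Proof. by move=> /SO_orth [_ h2]; rewrite rot_comp h2 rot1. Qed.

Lemma polyfun_mulmxr (T : comPzRingType) a b c (B : 'M[T]_(b, c)) (i : 'I_a) (j : 'I_c) :
  polyfun a b 1 (fun X => (X *m B) i j).
Proof.
apply: (@polyfun_ext _ _ _ _ (fun X => \sum_l B l j * X i l)).
  by move=> X; rewrite mxE; apply: eq_bigr => l _; rewrite mulrC.
apply: polyfun_sum => l; apply: polyfun_scale; exact: polyfun_coord.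
Qed.

Lemma polyfun_mulmxl (T : comPzRingType) a b c (B : 'M[T]_(c, a)) (i : 'I_c) (j : 'I_b) :
  polyfun a b 1 (fun X => (B *m X) i j).
Proof.
apply: (@polyfun_ext _ _ _ _ (fun X => \sum_l B i l * X l j)).
  by move=> X; rewrite mxE.
apply: polyfun_sum => l; apply: polyfun_scale; exact: polyfun_coord.
Qed.

Lemma polyfun_trmx (T : comPzRingType) a b (i : 'I_b) (j : 'I_a) :
  polyfun a b 1 (fun X : 'M[T]_(a, b) => X^T i j).
Proof.
apply: (@polyfun_ext _ _ _ _ (fun X => X j i)); first by move=> X; rewrite mxE.
exact: polyfun_coord.
Qed.

Lemma polyfun_mulmxrT (T : comPzRingType) a b c (B : 'M[T]_(c, a)) (i : 'I_c) (j : 'I_b) :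
  polyfun b a 1 (fun X => (B *m X^T) i j).
Proof.
apply: (@polyfun_ext _ _ _ _ (fun X => \sum_l B i l * X j l)).
  by move=> X; rewrite mxE; apply: eq_bigr => l _; rewrite mxE.
apply: polyfun_sum => l; apply: polyfun_scale; exact: polyfun_coord.
Qed.

Lemma mxmono_cmx a b (al : 'I_a -> 'I_b -> nat) (Q : 'M[R]_(a, b)) :
  mxmono a b al (cmx R a b Q) = (mxmono a b al Q)%:C.
Proof.
rewrite /mxmono rmorph_prod; apply: eq_bigr => i _.
rewrite rmorph_prod; apply: eq_bigr => j _.
by rewrite rmorphXn mxE.
Qed.

Lemma Re_sum (I : Type) (r : seq I) (F : I -> R[i]) :
  complex.Re (\sum_(x <- r) F x) = \sum_(x <- r) complex.Re (F x).
Proof.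
elim: r => [|x r IH]; first by rewrite !big_nil.
by rewrite !big_cons -IH; case: (F x) => ? ?; case: (\sum_(j <- r) F j).
Qed.

Lemma Im_sum (I : Type) (r : seq I) (F : I -> R[i]) :
  complex.Im (\sum_(x <- r) F x) = \sum_(x <- r) complex.Im (F x).
Proof.
elim: r => [|x r IH]; first by rewrite !big_nil.
by rewrite !big_cons -IH; case: (F x) => ? ?; case: (\sum_(j <- r) F j).
Qed.

Lemma Re_mulC (c : R[i]) (x : R) : complex.Re (c * x%:C) = complex.Re c * x.
Proof. by case: c => a b /=; rewrite mulr0 subr0. Qed.

Lemma Im_mulC (c : R[i]) (x : R) : complex.Im (c * x%:C) = complex.Im c * x.
Proof. by case: c => a b /=; rewrite mulr0 add0r. Qed.

Lemma polyfun_Re a b n (F : 'M[R[i]]_(a, b) -> R[i]) : polyfun a b n F ->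
  polyfun a b n (fun Q : 'M[R]_(a, b) => complex.Re (F (cmx R a b Q))).
Proof.
move=> [s [hs e]]; exists [seq (complex.Re x.1, x.2) | x <- s]; split.
  by rewrite all_map; apply: sub_all hs => x.
move=> Q; rewrite e /mxpoly_eval big_map Re_sum; apply: eq_bigr => x _.
by rewrite mxmono_cmx Re_mulC.
Qed.

Lemma polyfun_Im a b n (F : 'M[R[i]]_(a, b) -> R[i]) : polyfun a b n F ->
  polyfun a b n (fun Q : 'M[R]_(a, b) => complex.Im (F (cmx R a b Q))).
Proof.
move=> [s [hs e]]; exists [seq (complex.Im x.1, x.2) | x <- s]; split.
  by rewrite all_map; apply: sub_all hs => x.
move=> Q; rewrite e /mxpoly_eval big_map Im_sum; apply: eq_bigr => x _.
by rewrite mxmono_cmx Im_mulC.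
Qed.

Lemma is_mx_polyE k n p : is_mx_poly R k n p <-> polyfun k k n p.
Proof. by []. Qed.

Lemma inVE N k K g : inV R N k K g <->
  exists F, polyfun N k K F /\ forall M, M \in sphereN R N k -> g M = F (cmx R N k M).
Proof.
split.
  move=> [s [hs e]]; exists (mxpoly_eval N k s); split => //.
  by exists s.
move=> [F [[s [hs e]] h]]; exists s; split => // M hM.
by rewrite h // e.
Qed.

Lemma inV_rot N k K g (Q : 'M[R]_k) : Q \in SOset R k -> inV R N k K g ->
  inV R N k K (fun M => g (Defs.rot R N k Q M)).
Proof.
move=> hQ /inVE [F [hF e]]; apply/inVE.
exists (fun X => F (X *m (cmx R k k Q)^T)); split.
  apply: polyfun_comp hF _ => i j; exact: polyfun_mulmxr.
move=> M hM; rewrite e ?rot_sphere //.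
by rewrite /Defs.rot /cmx map_mxM map_trmx.
Qed.

Lemma inV_lin N k K (I : finType) (c : I -> R[i]) (g : I -> _) :
  (forall i, inV R N k K (g i)) -> inV R N k K (fun M => \sum_i c i * g i M).
Proof.
move=> h; apply/inVE.
have h' : forall i, exists F, polyfun N k K F /\
   forall M, M \in sphereN R N k -> g i M = F (cmx R N k M).
  by move=> i; apply/inVE.
have [F hF] := choice h'.
exists (fun X => \sum_i c i * F i X); split.
  apply: polyfun_sum => i; apply: polyfun_scale; exact: (hF i).1.
by move=> M hM; apply: eq_bigr => i _; rewrite (hF i).2.
Qed.

Lemma inV_Qpoly N k K g (M : 'M[R]_(N, k)) : inV R N k K g ->
  exists pr pi : 'M[R]_k -> R, polyfun k k K pr /\ polyfun k k K pi /\
   forall Q, Q \in SOset R k -> M \in sphereN R N k ->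
     g (Defs.rot R N k Q M) = pr Q +i* pi Q.
Proof.
move=> /inVE [F [hF e]].
pose G := fun X : 'M[R[i]]_k => F (cmx R N k M *m X^T).
have hG : polyfun k k K G by apply: polyfun_comp hF _ => i j; exact: polyfun_mulmxrT.
exists (fun Q => complex.Re (G (cmx R k k Q))), (fun Q => complex.Im (G (cmx R k k Q))).
split; first exact: polyfun_Re.
split; first exact: polyfun_Im.
move=> Q hQ hM; rewrite e ?rot_sphere // /G /Defs.rot /cmx map_mxM map_trmx.
by case: (F _).
Qed.

End Geo.


Set Implicit Arguments.
Unset Strict Implicit.

Section Meas.
Variable R : realType.

Lemma mcoord a b (i : 'I_a) (j : 'I_b) :
  measurable_fun setT (fun M : Mx R a b => M i j).
Proof.
move=> _ B mB; rewrite setTI; apply: sub_sigma_algebra; exists i, j, B; split => //.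
Qed.

Lemma polyfun_meas a b n (p : 'M[R]_(a, b) -> R) : polyfun a b n p ->
  measurable_fun setT (p : Mx R a b -> R).
Proof.
move=> [s [_ e]].
apply: (eq_measurable_fun (fun M : Mx R a b => mxpoly_eval a b s M)).
  by move=> M _; rewrite e.
rewrite /mxpoly_eval; elim: s {e} => [|x s IH].
  by under eq_fun do rewrite big_nil; exact: measurable_cst.
under eq_fun do rewrite big_cons.
apply: measurable_funD => //; apply: measurable_funM; first exact: measurable_cst.
rewrite /mxmono; elim: (index_enum _) => [|i r IHi].
  by under eq_fun do rewrite big_nil; exact: measurable_cst.
under eq_fun do rewrite big_cons.
apply: measurable_funM => //.
elim: (index_enum _) => [|j r' IHj].
  by under eq_fun do rewrite big_nil; exact: measurable_cst.
under eq_fun do rewrite big_cons.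
apply: measurable_funM => //; apply: measurable_funX; exact: mcoord.
Qed.

Lemma mono_le1 a b (al : 'I_a -> 'I_b -> nat) (M : 'M[R]_(a, b)) :
  (forall i j, `|M i j| <= 1) -> `|mxmono a b al M| <= 1.
Proof.
move=> h; rewrite /mxmono.
apply: (big_ind (fun x : R => `|x| <= 1)); rewrite ?normr1 //.
  by move=> x y hx hy; rewrite normrM mulr_ile1.
move=> i _; apply: (big_ind (fun x : R => `|x| <= 1)); rewrite ?normr1 //.
  by move=> x y hx hy; rewrite normrM mulr_ile1.
by move=> j _; rewrite normrX exprn_ile1.
Qed.

Lemma polyfun_bounded a b n (p : 'M[R]_(a, b) -> R) : polyfun a b n p ->
  exists C, forall M : 'M[R]_(a, b), (forall i j, `|M i j| <= 1) -> `|p M| <= C.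
Proof.
move=> [s [_ e]]; exists (\sum_(x <- s) `|x.1|) => M hM.
rewrite e /mxpoly_eval; apply: le_trans (ler_norm_sum _ _ _) _.
apply: ler_sum => x _; rewrite normrM.
by rewrite -[leRHS]mulr1 ler_wpM2l // mono_le1.
Qed.

Lemma sq_le1 (x : R) : x ^+ 2 <= 1 -> `|x| <= 1.
Proof. by move=> h; rewrite ler_norml; apply/andP; split; nra. Qed.

Lemma sphere_entry N k (M : 'M[R]_(N, k)) : M \in sphereN R N k ->
  forall i j, `|M i j| <= 1.
Proof.
rewrite inE => hM i j; have := hM i; rewrite inE /sphere /= => h.
apply: sq_le1; rewrite -h (bigD1 j) //= mxE lerDl.
by apply: sumr_ge0 => l _; rewrite sqr_ge0.
Qed.

Lemma SO_entry k (Q : 'M[R]_k) : Q \in SOset R k -> forall i j, `|Q i j| <= 1.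
Proof.
move=> /SO_orth [h _] i j; apply: sq_le1.
have : (Q^T *m Q) j j = 1 by rewrite h mxE eqxx.
rewrite mxE => <-; rewrite (bigD1 i) //= mxE -expr2 lerDl.
by apply: sumr_ge0 => l _; rewrite mxE -expr2 sqr_ge0.
Qed.

Definition ispoly a b (p : 'M[R]_(a, b) -> R) := exists n, polyfun a b n p.

Lemma ispoly_meas a b p : @ispoly a b p -> measurable_fun setT (p : Mx R a b -> R).
Proof. by case=> n; exact: polyfun_meas. Qed.

Lemma ispoly_add a b p q : @ispoly a b p -> ispoly q -> ispoly (fun M => p M + q M).
Proof.
move=> [n hp] [m hq]; exists (n + m)%N; apply: polyfun_add.
  exact: polyfun_le (leq_addr _ _) hp.
exact: polyfun_le (leq_addl _ _) hq.
Qed.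

Lemma ispoly_mul a b p q : @ispoly a b p -> ispoly q -> ispoly (fun M => p M * q M).
Proof. by move=> [n hp] [m hq]; exists (n + m)%N; apply: polyfun_mul. Qed.

Lemma ispoly_const a b c : @ispoly a b (fun _ => c).
Proof. by exists 0%N; exact: polyfun_const. Qed.

Lemma ispoly_ext a b p q : (forall M, p M = q M) -> @ispoly a b p -> ispoly q.
Proof. by move=> e [n h]; exists n; exact: polyfun_ext h. Qed.

Lemma ispoly_opp a b p : @ispoly a b p -> ispoly (fun M => - p M).
Proof.
move=> h; apply: (ispoly_ext _ (ispoly_mul (ispoly_const a b (-1)) h)).
by move=> M; rewrite mulN1r.
Qed.

Lemma ispoly_sum a b (I : finType) (F : I -> 'M[R]_(a, b) -> R) :
  (forall i, ispoly (F i)) -> ispoly (fun M => \sum_i F i M).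
Proof.
move=> h; have [n hn] := choice h.
exists (\sum_i n i)%N; apply: polyfun_sum => i.
by apply: polyfun_le (hn i); rewrite (bigD1 i) //= leq_addr.
Qed.

Lemma ispoly_coord a b i j : @ispoly a b (fun M => M i j).
Proof. by exists 1%N; exact: polyfun_coord. Qed.

Lemma meas_zero_set a b (p : 'M[R]_(a, b) -> R) : ispoly p ->
  measurable [set M : Mx R a b | p M = 0].
Proof.
move=> /ispoly_meas mp; have := mp measurableT _ (measurable_set1 (0 : R)).
by rewrite setTI.
Qed.

Lemma sphereN_meas N k : measurable (sphereN R N k : set (Mx R N k)).
Proof.
pose p := fun M : 'M[R]_(N, k) => \sum_i (\sum_j M i j ^+ 2 - 1) ^+ 2.
have hp : ispoly p.
  apply: ispoly_sum => i; apply: ispoly_mul; (apply: ispoly_add;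
   [apply: ispoly_sum => j; apply: ispoly_mul; exact: ispoly_coord|
    exact: ispoly_const]).
rewrite (_ : sphereN R N k = [set M | p M = 0]); first exact: meas_zero_set.
apply/seteqP; split => M /=.
  move=> hM; apply: big1 => i _.
  have := hM i; rewrite inE /sphere /=.
  rewrite (eq_bigr (fun j => M i j ^+ 2)) => [->|j _]; last by rewrite mxE.
  by rewrite subrr expr0n.
move=> /eqP; rewrite psumr_eq0; last by move=> i _; rewrite sqr_ge0.
move=> /allP h i; rewrite inE /sphere /=.
have := h i (mem_index_enum _); rewrite /= sqrf_eq0 subr_eq0 => /eqP <-.
by apply: eq_bigr => j _; rewrite mxE.
Qed.

Lemma ispoly_det k : @ispoly k k (fun Q => \det Q).
Proof.
rewrite /determinant.
apply: ispoly_sum => s; apply: ispoly_mul; first exact: ispoly_const.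
exists (\sum_(i <- index_enum 'I_k) 1)%N; apply: polyfun_prod_seq => i.
exact: polyfun_coord.
Qed.

Lemma SOset_meas k : measurable (SOset R k : set (Mx R k k)).
Proof.
pose p := fun Q : 'M[R]_k => \sum_i \sum_j ((Q^T *m Q) i j - (1%:M : 'M[R]_k) i j) ^+ 2
  + (\det Q - 1) ^+ 2.
have hQQ : forall i j, ispoly (fun Q : 'M[R]_k => (Q^T *m Q) i j).
  move=> i j; apply: (@ispoly_ext _ _ (fun Q => \sum_l Q l i * Q l j)).
    by move=> Q; rewrite mxE; apply: eq_bigr => l _; rewrite mxE.
  apply: ispoly_sum => l; apply: ispoly_mul; exact: ispoly_coord.
have hp : ispoly p.
  apply: ispoly_add.
    apply: ispoly_sum => i; apply: ispoly_sum => j.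
    have hh1 := ispoly_add (hQQ i j) (ispoly_opp (ispoly_const k k ((1%:M : 'M[R]_k) i j))).
    by apply: ispoly_mul; exact: hh1.
  have hh2 := ispoly_add (ispoly_det k) (ispoly_const k k (-1)).
  by apply: ispoly_mul; exact: hh2.
rewrite (_ : SOset R k = [set M | p M = 0]); first exact: meas_zero_set.
apply/seteqP; split => Q /=.
  move=> [h1 h2]; rewrite /p h1 h2 subrr expr0n addr0.
  by apply: big1 => i _; apply: big1 => j _; rewrite subrr expr0n.
move=> /eqP; rewrite /p paddr_eq0; first last.
- by rewrite sqr_ge0.
- by apply: sumr_ge0 => i _; apply: sumr_ge0 => j _; rewrite sqr_ge0.
move=> /andP[/eqP h1 /eqP h2]; split; last first.
  by move: h2; rewrite -[_ ^+ 2]/(_ * _) => /eqP; rewrite mulf_eq0 orbb subr_eq0 => /eqP.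
apply/matrixP => i j; move/eqP: h1; rewrite psumr_eq0; last first.
  by move=> i' _; apply: sumr_ge0 => j' _; rewrite sqr_ge0.
move=> /allP /(_ i (mem_index_enum _)) /=; rewrite psumr_eq0; last first.
  by move=> j' _; rewrite sqr_ge0.
move=> /allP /(_ j (mem_index_enum _)).
by rewrite sqrf_eq0 subr_eq0 => /eqP.
Qed.

End Meas.


Set Implicit Arguments.
Unset Strict Implicit.

Section Inv.
Variable R : realType.

Lemma boundedP (T : Type) (A : set T) (f : T -> R) C :
  (forall x, A x -> `|f x| <= C) -> [bounded f x | x in A].
Proof.
move=> h; exists C; split; first exact: num_real.
move=> M hM x Ax; apply: le_trans (h x Ax) (ltW hM).
Qed.

Lemma inv_integral d (T : measurableType d) (m : {measure set T -> \bar R})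
  (phi : T -> T) (D : set T) (G : T -> R) :
  measurable_fun setT phi ->
  (forall A, measurable A -> m (phi @^-1` A) = m A) ->
  measurable D -> phi @^-1` D = D -> measurable_fun setT G ->
  (m D < +oo)%E -> (exists C, forall x, D x -> `|G x| <= C) ->
  (\int[m]_(x in D) (G (phi x))%:E = \int[m]_(x in D) (G x)%:E)%E.
Proof.
move=> mphi hm mD hD mG mDfin [C hC].
have mfG : measurable_fun setT (EFin \o G) by exact/measurable_EFinP.
have intf : m.-integrable (phi @^-1` D) ((EFin \o G) \o phi).
  rewrite hD; apply: (measurable_bounded_integrable mD mDfin).
    by apply: measurable_funS (measurableT_comp mG mphi).
  apply: (boundedP (C := C)) => x Dx; apply: hC.
  by have : (phi @^-1` D) x by rewrite hD.
have h := integral_pushforward mphi mfG intf mD.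
rewrite hD in h.
transitivity (\int[m]_(x in D) ((EFin \o G) \o phi) x)%E; first by [].
rewrite -h; apply: eq_measure_integral => A mA _.
exact: hm.
Qed.

Lemma mxmap_meas a b c e (f : Mx R a b -> Mx R c e) :
  (forall i j, measurable_fun setT (fun X => f X i j)) -> measurable_fun setT f.
Proof.
move=> h; apply: (@measurability _ _ _ _ setT f (coord_sets R c e)) => //.
move=> _ [_ [i [j [B [mB ->]]]] <-].
have := h i j measurableT B mB.
by rewrite /preimage /=.
Qed.

Lemma ispoly_mxmap a b c e (f : 'M[R]_(a, b) -> 'M[R]_(c, e)) :
  (forall i j, ispoly (fun X => f X i j)) -> measurable_fun setT (f : Mx R a b -> Mx R c e).
Proof. by move=> h; apply: mxmap_meas => i j; apply: ispoly_meas. Qed.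

Lemma rot_meas N k (Q : 'M[R]_k) :
  measurable_fun setT (Defs.rot R N k Q : Mx R N k -> Mx R N k).
Proof.
apply: ispoly_mxmap => i j; exists 1%N; exact: polyfun_mulmxr.
Qed.

Lemma rmul_meas k (Q : 'M[R]_k) :
  measurable_fun setT ((fun r => r *m Q^T) : Mx R 1 k -> Mx R 1 k).
Proof. apply: ispoly_mxmap => i j; exists 1%N; exact: polyfun_mulmxr. Qed.

Lemma lmul_meas k (Q : 'M[R]_k) :
  measurable_fun setT ((fun M => Q *m M) : Mx R k k -> Mx R k k).
Proof. apply: ispoly_mxmap => i j; exists 1%N; exact: polyfun_mulmxl. Qed.

Lemma row_meas N k (i : 'I_N) :
  measurable_fun setT ((fun M => row i M) : Mx R N k -> Mx R 1 k).
Proof.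
apply: ispoly_mxmap => i' j; apply: (@ispoly_ext _ _ _ (fun M => M i j)).
  by move=> M; rewrite mxE.
exact: ispoly_coord.
Qed.

Definition rect N k : set (set (Mx R N k)) :=
  fun S => exists A : 'I_N -> set (Mx R 1 k), (forall i, measurable (A i)) /\
    S = [set M | forall i, A i (row i M)].
Arguments rect : clear implicits.

Lemma rect_meas N k S : rect N k S -> measurable S.
Proof.
move=> [A [mA ->]].
rewrite (_ : [set M | _] = \bigcap_(i in setT) ((fun M => row i M) @^-1` A i)).
  apply: fin_bigcap_measurable; first exact: finite_finset.
  move=> i _; have := row_meas i measurableT (mA i); by rewrite setTI.
by apply/seteqP; split => M /= h i; [move=> _; exact: h|exact: h].
Qed.

Lemma rect_gen N k : @measurable _ (Mx R N k) = <<s rect N k >>.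
Proof.
apply/seteqP; split; last first.
  apply: smallest_sub; first exact: sigma_algebra_measurable.
  by move=> S; exact: rect_meas.
apply: smallest_sub; first exact: smallest_sigma_algebra.
move=> _ [i [j [B [mB ->]]]]; apply: sub_sigma_algebra.
exists (fun i' => if i' == i then [set r : Mx R 1 k | B (r 0 j)] else setT); split.
  move=> i'; case: ifP => _ //; apply: sub_sigma_algebra.
  by exists 0, j, B; split.
apply/seteqP; split => M /=.
  by move=> hB i'; case: ifP => // /eqP ->; rewrite /= ?mxE.
by move=> /(_ i); rewrite eqxx /= ?mxE.
Qed.

Lemma rect_setI N k : setI_closed (rect N k).
Proof.
move=> _ _ [A [mA ->]] [B [mB ->]]; exists (fun i => A i `&` B i); split.
  by move=> i; apply: measurableI.
by apply/seteqP; split => M /=; [move=> [h1 h2] i; split|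
  move=> h; split => i; case: (h i)].
Qed.

Lemma rect_setT N k : rect N k setT.
Proof.
by exists (fun _ => setT); split => //; apply/seteqP; split.
Qed.

Lemma mu_setT N k (sigma : {measure set (Mx R 1 k) -> \bar R})
  (mu : {measure set (Mx R N k) -> \bar R}) :
  is_unif_sphere R k sigma -> is_product_measure R N k sigma mu -> mu setT = 1%E.
Proof.
move=> [s1 _ _] hp.
have := hp (fun _ => setT) (fun _ => measurableT).
rewrite (_ : [set M | _] = setT); last by apply/seteqP; split.
by move=> ->; rewrite big1 // => i _.
Qed.

Lemma mu_rot N k (sigma : {measure set (Mx R 1 k) -> \bar R})
  (mu : {measure set (Mx R N k) -> \bar R}) (Q : 'M[R]_k) :
  is_unif_sphere R k sigma -> is_product_measure R N k sigma mu ->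
  Q \in SOset R k ->
  forall A : set (Mx R N k), measurable A -> mu (Defs.rot R N k Q @^-1` A) = mu A.
Proof.
move=> hs hp hQ A mA.
have mrot := @rot_meas N k Q.
have := @measure_unique _ R (Mx R N k) (rect N k) (fun _ => setT) (rect_gen N k)
  (@rect_setI N k) (fun _ => rect_setT N k) (bigcup_const _ _)
  (pushforward mu (Defs.rot R N k Q : Mx R N k -> Mx R N k)) mu.
apply => //.
  move=> _ [B [mB ->]]; rewrite /pushforward /=.
  transitivity (mu [set M : Mx R N k | forall i, ((fun r : Mx R 1 k => r *m Q^T) @^-1` B i) (row i M)]).
    by congr (mu _); apply/seteqP; split => M /= h i; have := h i; rewrite /Defs.rot row_mul.
  have mB' : forall i, measurable ((fun r : Mx R 1 k => r *m Q^T) @^-1` B i).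
    by move=> i; have := rmul_meas Q measurableT (mB i); rewrite setTI.
  rewrite (hp _ mB') (hp _ mB); apply: eq_bigr => i _.
  by case: hs => _ _ ->.
move=> _; change (mu (Defs.rot R N k Q @^-1` setT) < +oo)%E; rewrite preimage_setT.
by rewrite (mu_setT hs hp) ltry.
Qed.

End Inv.


Set Implicit Arguments.
Unset Strict Implicit.

Section Cint.
Variable R : realType.
Variables (N k : nat) (sigma : {measure set (Mx R 1 k) -> \bar R})
  (mu : {measure set (Mx R N k) -> \bar R}).
Hypothesis hs : is_unif_sphere R k sigma.
Hypothesis hp : is_product_measure R N k sigma mu.

Definition cpoly (g : 'M[R]_(N, k) -> R[i]) := exists pr pi : 'M[R]_(N, k) -> R,
  [/\ ispoly pr, ispoly pi & forall M, M \in sphereN R N k -> g M = pr M +i* pi M].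

Lemma cpoly_ext f g : (forall M, M \in sphereN R N k -> f M = g M) -> cpoly f -> cpoly g.
Proof.
move=> e [pr [pi [h1 h2 h3]]]; exists pr, pi; split => // M hM.
by rewrite -e // h3.
Qed.

Lemma inV_cpoly K g : inV R N k K g -> cpoly g.
Proof.
move=> /inVE [F [hF e]].
exists (fun M => complex.Re (F (cmx R N k M))), (fun M => complex.Im (F (cmx R N k M))).
split; [by exists K; exact: polyfun_Re|by exists K; exact: polyfun_Im|].
by move=> M hM; rewrite e //; case: (F _).
Qed.

Lemma cpoly_add f g : cpoly f -> cpoly g -> cpoly (fun M => f M + g M).
Proof.
move=> [pr [pi [h1 h2 h3]]] [qr [qi [h4 h5 h6]]].
exists (fun M => pr M + qr M), (fun M => pi M + qi M); split.
- exact: ispoly_add.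
- exact: ispoly_add.
by move=> M hM; rewrite h3 // h6.
Qed.

Lemma cpoly_mul f g : cpoly f -> cpoly g -> cpoly (fun M => f M * g M).
Proof.
move=> [pr [pi [h1 h2 h3]]] [qr [qi [h4 h5 h6]]].
exists (fun M => pr M * qr M + - (pi M * qi M)), (fun M => pr M * qi M + pi M * qr M); split.
- by apply: ispoly_add; [|apply: ispoly_opp]; exact: ispoly_mul.
- by apply: ispoly_add; exact: ispoly_mul.
by move=> M hM; rewrite h3 // h6.
Qed.

Lemma cpoly_const c : cpoly (fun _ => c).
Proof.
exists (fun _ => complex.Re c), (fun _ => complex.Im c); split;
  try exact: ispoly_const.
by move=> M _; case: c.
Qed.

Lemma cpoly_conj f : cpoly f -> cpoly (fun M => (f M)^*).
Proof.
move=> [pr [pi [h1 h2 h3]]]; exists pr, (fun M => - pi M); split => //.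
  exact: ispoly_opp.
by move=> M hM; rewrite h3.
Qed.

Lemma cpoly_sum_seq (I : Type) (r : seq I) (F : I -> 'M[R]_(N, k) -> R[i]) :
  (forall i, cpoly (F i)) -> cpoly (fun M => \sum_(i <- r) F i M).
Proof.
move=> h; elim: r => [|x r IH].
  by apply: (cpoly_ext _ (cpoly_const 0)) => M _; rewrite big_nil.
apply: (cpoly_ext _ (cpoly_add (h x) IH)) => M _; rewrite big_cons.
by [].
Qed.

Lemma cpoly_sum (I : finType) (F : I -> 'M[R]_(N, k) -> R[i]) :
  (forall i, cpoly (F i)) -> cpoly (fun M => \sum_i F i M).
Proof. exact: cpoly_sum_seq. Qed.

Lemma ispoly_rot (Q : 'M[R]_k) p : ispoly p -> ispoly (fun M => p (Defs.rot R N k Q M)).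
Proof.
move=> [n hn]; exists n; apply: polyfun_comp hn _ => i j.
exact: polyfun_mulmxr.
Qed.

Lemma cpoly_rot (Q : 'M[R]_k) f : Q \in SOset R k -> cpoly f ->
  cpoly (fun M => f (Defs.rot R N k Q M)).
Proof.
move=> hQ [pr [pi [h1 h2 h3]]].
exists (fun M => pr (Defs.rot R N k Q M)), (fun M => pi (Defs.rot R N k Q M)); split.
- exact: ispoly_rot.
- exact: ispoly_rot.
by move=> M hM; rewrite h3 // rot_sphere.
Qed.

Lemma mu_sphere_fin : (mu (sphereN R N k) < +oo)%E.
Proof.
apply: le_lt_trans (_ : mu setT < +oo)%E.
  by apply: le_measure; rewrite ?inE //; exact: sphereN_meas.
by rewrite (mu_setT hs hp) ltry.
Qed.

Lemma ispoly_bound p : ispoly p -> exists C, forall M, M \in sphereN R N k -> `|p M| <= C.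
Proof.
move=> [n hn]; have [C hC] := polyfun_bounded hn; exists C => M hM.
by apply: hC; exact: sphere_entry.
Qed.

Lemma ispoly_integrable p (q : 'M[R]_(N, k) -> R) : ispoly p ->
  (forall M, M \in sphereN R N k -> q M = p M) ->
  mu.-integrable (sphereN R N k) (EFin \o (q : Mx R N k -> R)).
Proof.
move=> hpol e; have [C hC] := ispoly_bound hpol.
apply: (measurable_bounded_integrable (@sphereN_meas R N k) mu_sphere_fin).
  apply: (eq_measurable_fun (p : Mx R N k -> R)).
    by move=> M hM; rewrite e //; move: hM; rewrite inE.
  apply: measurable_funS (ispoly_meas hpol) => //; exact: sphereN_meas.
apply: (boundedP (C := C)) => M hM; rewrite e ?inE //; apply: hC; rewrite inE.
by [].
Qed.

Lemma cpoly_intRe f : cpoly f ->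
  mu.-integrable (sphereN R N k) (EFin \o (fun M : Mx R N k => complex.Re (f M))).
Proof.
move=> [pr [pi [h1 h2 h3]]]; apply: (ispoly_integrable h1) => M hM.
by rewrite h3.
Qed.

Lemma cpoly_intIm f : cpoly f ->
  mu.-integrable (sphereN R N k) (EFin \o (fun M : Mx R N k => complex.Im (f M))).
Proof.
move=> [pr [pi [h1 h2 h3]]]; apply: (ispoly_integrable h2) => M hM.
by rewrite h3.
Qed.

Lemma cint_add f g : cpoly f -> cpoly g ->
  cint R N k mu (fun M => f M + g M) = cint R N k mu f + cint R N k mu g.
Proof.
move=> hf hg; rewrite /cint.
have mS := @sphereN_meas R N k.
have eRe : forall M, complex.Re (f M + g M) = complex.Re (f M) + complex.Re (g M).
  by move=> M; case: (f M); case: (g M).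
have eIm : forall M, complex.Im (f M + g M) = complex.Im (f M) + complex.Im (g M).
  by move=> M; case: (f M); case: (g M).
under eq_Rintegral do rewrite eRe.
under [X in _ +i* X]eq_Rintegral do rewrite eIm.
rewrite (RintegralD mS (cpoly_intRe hf) (cpoly_intRe hg)).
by rewrite (RintegralD mS (cpoly_intIm hf) (cpoly_intIm hg)).
Qed.

Lemma intZ (D : set (Mx R N k)) (f : Mx R N k -> R) r : measurable D ->
  mu.-integrable D (EFin \o f) -> mu.-integrable D (EFin \o (fun x => r * f x)).
Proof. move=> mD h; exact: (integrableZl mD r h). Qed.

Lemma cint_scale c f : cpoly f ->
  cint R N k mu (fun M => c * f M) = c * cint R N k mu f.
Proof.
move=> hf; rewrite /cint.
have mS := @sphereN_meas R N k.
have eRe : forall M, complex.Re (c * f M) =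
   complex.Re c * complex.Re (f M) - complex.Im c * complex.Im (f M).
  by move=> M; case: (f M); case: c.
have eIm : forall M, complex.Im (c * f M) =
   complex.Re c * complex.Im (f M) + complex.Im c * complex.Re (f M).
  by clear eRe => M; case: (f M); case: c.
under eq_Rintegral do rewrite eRe.
under [X in _ +i* X]eq_Rintegral do rewrite eIm.
have iRe := cpoly_intRe hf; have iIm := cpoly_intIm hf.
rewrite (RintegralB mS (intZ _ mS iRe) (intZ _ mS iIm)).
rewrite (RintegralD mS (intZ _ mS iIm) (intZ _ mS iRe)).
rewrite !RintegralZl //.
by clear eRe eIm; case: c.
Qed.

Lemma cint_sum_seq (I : Type) (r : seq I) (c : I -> R[i]) (F : I -> 'M[R]_(N, k) -> R[i]) :
  (forall i, cpoly (F i)) ->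
  cint R N k mu (fun M => \sum_(i <- r) c i * F i M) = \sum_(i <- r) c i * cint R N k mu (F i).
Proof.
move=> h; elim: r => [|x r IH].
  rewrite big_nil /cint.
  rewrite (@eq_Rintegral _ _ _ _ _ (fun=> 0)); last by move=> M _; rewrite big_nil.
  rewrite [X in _ +i* X](@eq_Rintegral _ _ _ _ _ (fun=> 0)); last by move=> M _; rewrite big_nil.
  by rewrite /Rintegral integral0.
rewrite big_cons -IH -cint_scale ?h // -cint_add; last first.
- apply: cpoly_sum_seq => i; apply: cpoly_mul; [exact: cpoly_const|exact: h].
- by apply: cpoly_mul; [exact: cpoly_const|exact: h].
by congr cint; apply: funext => M; rewrite big_cons.
Qed.

Lemma cint_sum (I : finType) (c : I -> R[i]) (F : I -> 'M[R]_(N, k) -> R[i]) :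
  (forall i, cpoly (F i)) ->
  cint R N k mu (fun M => \sum_i c i * F i M) = \sum_i c i * cint R N k mu (F i).
Proof. exact: cint_sum_seq. Qed.

Lemma cint_ext f g : (forall M, M \in sphereN R N k -> f M = g M) ->
  cint R N k mu f = cint R N k mu g.
Proof.
move=> e; rewrite /cint.
rewrite (@eq_Rintegral _ _ _ _ _ (fun M : Mx R N k => complex.Re (g M))); last first.
  by move=> M hM; rewrite e.
rewrite [X in _ +i* X](@eq_Rintegral _ _ _ _ _ (fun M : Mx R N k => complex.Im (g M))) //.
by move=> M hM; rewrite e.
Qed.

Lemma Rint_rot (Q : 'M[R]_k) p : Q \in SOset R k -> ispoly p ->
  Rintegral mu (sphereN R N k : set (Mx R N k)) (fun M => p (Defs.rot R N k Q M)) =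
  Rintegral mu (sphereN R N k : set (Mx R N k)) p.
Proof.
move=> hQ hpol; rewrite /Rintegral; congr fine.
have [C hC] := ispoly_bound hpol.
apply: (inv_integral (m:=mu) (G:= p : Mx R N k -> R) (rot_meas (N:=N) Q) (mu_rot hs hp hQ) (@sphereN_meas R N k)).
- apply/seteqP; split => M /=.
    move=> h; have h' : Defs.rot R N k Q M \in sphereN R N k by rewrite inE.
    by have := rot_sphere (SO_tr hQ) h'; rewrite rot_comp (SO_orth hQ).1 rot1 inE.
  by move=> h; rewrite -inE; apply: rot_sphere => //; rewrite inE.
- exact: ispoly_meas.
- exact: mu_sphere_fin.
by exists C => M hM; apply: hC; rewrite inE.
Qed.

Lemma cint_rot (Q : 'M[R]_k) f : Q \in SOset R k -> cpoly f ->
  cint R N k mu (fun M => f (Defs.rot R N k Q M)) = cint R N k mu f.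
Proof.
move=> hQ [pr [pi [h1 h2 h3]]].
rewrite (cint_ext (g := fun M => pr (Defs.rot R N k Q M) +i* pi (Defs.rot R N k Q M))); last first.
  by move=> M hM; rewrite h3 // rot_sphere.
rewrite (cint_ext (f := f) (g := fun M => pr M +i* pi M)); last by move=> M hM; rewrite h3.
by rewrite /cint /= Rint_rot // Rint_rot.
Qed.

End Cint.


Set Implicit Arguments.
Unset Strict Implicit.

Section Quad.
Variable R : realType.
Variables (k T nq : nat) (H : {measure set (Mx R k k) -> \bar R})
  (w : 'I_T -> R) (Q : 'I_T -> 'M[R]_k).
Hypothesis hH : is_Haar R k H.
Hypothesis hq : quadrature_exact R k T nq H w Q.
Hypothesis hw1 : \sum_t w t = 1.
Hypothesis hQ : forall t, Q t \in SOset R k.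

Lemma H_SO_fin : (H (SOset R k) < +oo)%E.
Proof.
case: hH => h1 _ _; apply: le_lt_trans (_ : H setT < +oo)%E.
  by apply: le_measure; rewrite ?inE //; exact: SOset_meas.
by rewrite h1 ltry.
Qed.

Lemma quad_left n p (Q' : 'M[R]_k) : (n <= nq)%N -> polyfun k k n p ->
  Q' \in SOset R k ->
  \sum_t w t * p (Q' *m Q t) = \sum_t w t * p (Q t).
Proof.
move=> hn hp hQ'.
have hp' : polyfun k k n (fun M => p (Q' *m M)).
  by apply: polyfun_comp hp _ => i j; exact: polyfun_mulmxl.
have e1 := hq (polyfun_le hn hp'); have e2 := hq (polyfun_le hn hp).
apply: EFin_inj; rewrite e1 e2.
have [C hC] := polyfun_bounded hp.
apply: (inv_integral (m := H) (G := p : Mx R k k -> R) (lmul_meas Q')).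
- by move=> A mA; case: hH => _ _ ->.
- exact: SOset_meas.
- apply/seteqP; split => M /=.
    move=> h; have h' : Q' *m M \in SOset R k by rewrite inE.
    have := SO_mul (SO_tr hQ') h'; rewrite mulmxA (SO_orth hQ').1 mul1mx.
    by rewrite inE.
  by move=> h; rewrite -inE; apply: SO_mul => //; rewrite inE.
- exact: polyfun_meas hp.
- exact: H_SO_fin.
by exists C => M hM; apply: hC; apply: SO_entry; rewrite inE.
Qed.

Lemma quad_tr n p : (n <= nq)%N -> polyfun k k n p ->
  \sum_t w t * p (Q t)^T = \sum_t w t * p (Q t).
Proof.
move=> hn hp.
have hpT : polyfun k k n (fun M => p M^T).
  by apply: polyfun_comp hp _ => i j; exact: polyfun_trmx.
pose S := \sum_s \sum_t w s * w t * p ((Q s)^T *m Q t).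
have e1 : S = \sum_t w t * p (Q t).
  rewrite /S (eq_bigr (fun s => w s * \sum_t w t * p (Q t))); last first.
    move=> s _; rewrite -(quad_left hn hp (SO_tr (hQ s))) big_distrr /=.
    by apply: eq_bigr => t _; rewrite mulrA.
  by rewrite -big_distrl /= hw1 mul1r.
have e2 : S = \sum_t w t * p (Q t)^T.
  rewrite /S exchange_big /=.
  rewrite (eq_bigr (fun t => w t * \sum_s w s * p (Q s)^T)); last first.
    move=> t _.
    have := quad_left hn hpT (SO_tr (hQ t)).
    rewrite /= => <-; rewrite big_distrr /=; apply: eq_bigr => s _.
    by rewrite trmx_mul trmxK; ring.
  by rewrite -big_distrl /= hw1 mul1r.
by rewrite -e1 -e2.
Qed.

Lemma quad_right n p (Q' : 'M[R]_k) : (n <= nq)%N -> polyfun k k n p ->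
  Q' \in SOset R k ->
  \sum_t w t * p (Q t *m Q') = \sum_t w t * p (Q t).
Proof.
move=> hn hp hQ'.
have hr : polyfun k k n (fun M => p (M *m Q')).
  by apply: polyfun_comp hp _ => i j; exact: polyfun_mulmxr.
rewrite -(quad_tr hn hr) /=.
have hpT : polyfun k k n (fun M => p M^T).
  by apply: polyfun_comp hp _ => i j; exact: polyfun_trmx.
have := quad_left hn hpT (SO_tr hQ').
rewrite (quad_tr hn hp) => <-.
by apply: eq_bigr => t _; rewrite trmx_mul trmxK.
Qed.

End Quad.


Set Implicit Arguments.
Unset Strict Implicit.

Section StepA.
Variable R : realType.
Variables (N d K : nat) (sigma : {measure set (Mx R 1 d.+1) -> \bar R})
  (mu : {measure set (Mx R N d.+1) -> \bar R})
  (H : {measure set (Mx R d.+1 d.+1) -> \bar R}).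
Hypothesis hs : is_unif_sphere R d.+1 sigma.
Hypothesis hp : is_product_measure R N d.+1 sigma mu.
Hypothesis hH : is_Haar R d.+1 H.
Variables (m mI : nat) (phi : 'I_m -> 'M[R]_(N, d.+1) -> R[i]).
Hypothesis hV : forall j, inV R N d.+1 K (phi j).
Hypothesis hON : forall j k, l2inner R N d.+1 mu (phi j) (phi k) = (j == k)%:R.
Hypothesis hB : forall j : 'I_m, (j < mI)%N -> inB R N d.+1 K (phi j).
Hypothesis hexpB : forall g, inB R N d.+1 K g -> exists c : 'I_m -> R[i],
     (forall j : 'I_m, (mI <= j)%N -> c j = 0) /\
     forall M, M \in sphereN R N d.+1 -> g M = \sum_j c j * phi j M.
Variables (T nq : nat) (w : 'I_T -> R) (Q : 'I_T -> 'M[R]_d.+1).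
Hypothesis hw1 : \sum_t w t = 1.
Hypothesis hQ : forall t, Q t \in SOset R d.+1.
Hypothesis hq : quadrature_exact R d.+1 T nq H w Q.
Hypothesis hKn : (K <= nq)%N.

Local Notation rot := (Defs.rot R N d.+1).

Lemma csum (I : Type) (r : seq I) (c : I -> R) (a b : I -> R) :
  \sum_(t <- r) (c t)%:C * (a t +i* b t) = (\sum_(t <- r) c t * a t) +i* (\sum_(t <- r) c t * b t).
Proof.
elim: r => [|x r IH]; first by rewrite !big_nil.
rewrite !big_cons IH; apply/eqP; rewrite eq_complex /=; apply/andP; split; apply/eqP; ring.
Qed.

Lemma stepA (j : 'I_m) : (mI <= j)%N -> forall M, M \in sphereN R N d.+1 ->
  \sum_t (w t)%:C * phi j (rot (Q t) M) = 0.
Proof.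
move=> hj.
pose psi := fun M => \sum_t (w t)%:C * phi j (rot (Q t) M).
have hpsiV : inV R N d.+1 K psi.
  by apply: inV_lin => t; exact: inV_rot (hQ t) (hV j).
have hpsiI : rot_inv R N d.+1 psi.
  move=> Q' M hQ' hM; rewrite /psi.
  have [pr [pi [hpr [hpi e]]]] := inV_Qpoly M (hV j).
  rewrite (eq_bigr (fun t => (w t)%:C * (pr (Q t *m Q') +i* pi (Q t *m Q')))); last first.
    by move=> t _; rewrite rot_comp e // SO_mul.
  rewrite [RHS](eq_bigr (fun t => (w t)%:C * (pr (Q t) +i* pi (Q t)))); last first.
    by move=> t _; rewrite e.
  rewrite !csum.
  by rewrite (quad_right hH hq hw1 hQ hKn hpr hQ') (quad_right hH hq hw1 hQ hKn hpi hQ').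
have [c [hc0 hce]] := hexpB (conj hpsiV hpsiI).
have cpV : forall l, cpoly (phi l) by move=> l; exact: inV_cpoly (hV l).
have c0 : forall l, c l = 0.
  move=> l; case: (leqP mI l) => hl; first exact: hc0.
  have [hlV hlI] := hB hl.
  have key1 : l2inner R N d.+1 mu psi (phi l) = c l.
    rewrite /l2inner (cint_ext mu (g := fun M => \sum_l' c l' * (phi l' M * (phi l M)^*))); last first.
      by move=> M hM; rewrite hce // mulr_suml; apply: eq_bigr => l' _; rewrite mulrA.
    rewrite (cint_sum hs hp); last first.
      by move=> l'; apply: cpoly_mul; [exact: cpV|apply: cpoly_conj; exact: cpV].
    rewrite (bigD1 l) //= big1 ?addr0.
      by have := hON l l; rewrite /l2inner eqxx => ->; rewrite mulr1.
    by move=> l' hl'; have := hON l' l; rewrite /l2inner (negbTE hl') => ->; rewrite mulr0.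
  have key2 : l2inner R N d.+1 mu psi (phi l) = 0.
    rewrite /l2inner (cint_ext mu (g := fun M => \sum_t (w t)%:C *
        (phi j (rot (Q t) M) * (phi l (rot (Q t) M))^*))); last first.
      move=> M hM; rewrite /psi mulr_suml; apply: eq_bigr => t _.
      by rewrite hlI // mulrA.
    rewrite (cint_sum hs hp); last first.
      move=> t; apply: (cpoly_rot (f := fun M => phi j M * (phi l M)^*) (hQ t)); apply: cpoly_mul; [exact: cpV|].
      by apply: cpoly_conj; exact: cpV.
    apply: big1 => t _.
    rewrite (cint_rot hs hp (f := fun M => phi j M * (phi l M)^*) (hQ t)); last first.
      by apply: cpoly_mul; [exact: cpV|apply: cpoly_conj; exact: cpV].
    have := hON j l; rewrite /l2inner => ->.
    have -> : (j == l) = false.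
      by apply/negbTE; apply/eqP => e; move: hl; rewrite -e ltnNge hj.
    by rewrite mulr0.
  by rewrite -key1 key2.
move=> M hM; rewrite -/(psi M) hce //; apply: big1 => l _.
by rewrite c0 mul0r.
Qed.

End StepA.


Set Implicit Arguments.
Unset Strict Implicit.

Section Alg.
Variable R : realType.

Lemma sqmodD (z u : R[i]) : sqmod R (z + u) =
  sqmod R z + sqmod R u + 2 * (complex.Re z * complex.Re u + complex.Im z * complex.Im u).
Proof. by case: z => a b; case: u => c e; rewrite /sqmod /=; ring. Qed.

Lemma sqmod_ge0 (z : R[i]) : 0 <= sqmod R z.
Proof. by rewrite /sqmod addr_ge0 // sqr_ge0. Qed.

Lemma sqmod_eq0 (z : R[i]) : sqmod R z = 0 -> z = 0.
Proof.
case: z => a b; rewrite /sqmod /= => /eqP; rewrite paddr_eq0 ?sqr_ge0 //.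
by rewrite !sqrf_eq0 => /andP[/eqP -> /eqP ->].
Qed.

Lemma Re_wmul (x : R) (u : R[i]) : complex.Re (x%:C * u) = x * complex.Re u.
Proof. by case: u => a b /=; rewrite mul0r subr0. Qed.

Lemma Im_wmul (x : R) (u : R[i]) : complex.Im (x%:C * u) = x * complex.Im u.
Proof. by case: u => a b /=; rewrite mul0r addr0. Qed.

Lemma aug_split n T (w : 'I_T -> R) (z : 'I_n -> R[i]) (u : 'I_T -> 'I_n -> R[i]) :
  (forall i, \sum_t (w t)%:C * u t i = 0) ->
  \sum_t w t * \sum_i sqmod R (z i + u t i) =
  \sum_t w t * \sum_i sqmod R (z i) + \sum_t w t * \sum_i sqmod R (u t i).
Proof.
move=> h.
have hRe : forall i, \sum_t w t * complex.Re (u t i) = 0.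
  move=> i; have := congr1 (@complex.Re R) (h i); rewrite Re_sum.
  by under eq_bigr do rewrite Re_wmul.
have hIm : forall i, \sum_t w t * complex.Im (u t i) = 0.
  move=> i; have := congr1 (@complex.Im R) (h i); rewrite Im_sum.
  by under eq_bigr do rewrite Im_wmul.
rewrite -big_split /=.
transitivity (\sum_t (w t * \sum_i sqmod R (z i) + w t * \sum_i sqmod R (u t i)
   + \sum_i 2 * (complex.Re (z i) * (w t * complex.Re (u t i)) +
                 complex.Im (z i) * (w t * complex.Im (u t i))))).
  apply: eq_bigr => t _; rewrite -mulrDr -big_split /= big_distrr /= big_distrr /=.
  rewrite -big_split /=; apply: eq_bigr => i _; rewrite sqmodD; ring.
rewrite big_split /= [X in _ + X = _]exchange_big /=.
rewrite [X in _ + X = _]big1 ?addr0 // => i _.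
rewrite -big_distrr /= big_split /= -!big_distrr /= hRe hIm.
by rewrite !mulr0 addr0 mulr0.
Qed.

End Alg.
Unset Implicit Arguments.

Theorem mainTheorem6 (R : realType) (N d K : nat)
  (* reference measures: normalised uniform measure on S^d, its N-fold product,
     and the normalised Haar measure on SO(d+1) *)
  (sigma : {measure set (Mx R 1 d.+1) -> \bar R})
  (mu : {measure set (Mx R N d.+1) -> \bar R})
  (H : {measure set (Mx R d.+1 d.+1) -> \bar R}) :
  is_unif_sphere R d.+1 sigma ->
  is_product_measure R N d.+1 sigma mu ->
  is_Haar R d.+1 H ->
  (* orthonormal basis phi_0, ..., phi_(m-1) of V_K, the first mI spanning B_K,
     the remaining ones spanning its orthogonal complement *)
  forall (m mI : nat) (phi : 'I_m -> matrix R N d.+1 -> R[i]),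
  (mI <= m)%N ->
  (forall j, inV R N d.+1 K (phi j)) ->
  (forall j k, l2inner R N d.+1 mu (phi j) (phi k) = (j == k)%:R) ->
  (forall g, inV R N d.+1 K g -> exists c : 'I_m -> R[i],
     forall M, M \in sphereN R N d.+1 -> g M = \sum_j c j * phi j M) ->
  (forall j : 'I_m, (j < mI)%N -> inB R N d.+1 K (phi j)) ->
  (forall g, inB R N d.+1 K g -> exists c : 'I_m -> R[i],
     (forall j : 'I_m, (mI <= j)%N -> c j = 0) /\
     forall M, M \in sphereN R N d.+1 -> g M = \sum_j c j * phi j M) ->
  (forall j : 'I_m, (mI <= j)%N ->
     forall g, inB R N d.+1 K g -> l2inner R N d.+1 mu (phi j) g = 0) ->
  (* data *)
  forall (n : nat) (Rp : 'I_n -> matrix R N d.+1) (f : matrix R N d.+1 -> R[i]),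
  (forall i, Rp i \in sphereN R N d.+1) ->
  rot_inv R N d.+1 f ->
  let Y : matrix R[i] n 1 := \col_i f (Rp i) in
  let A := design R N d.+1 n m phi Rp 1%:M in
  \rank A = m ->
  (* quadrature rule with positive weights and degree of accuracy nq >= K *)
  forall (T nq : nat) (w : 'I_T -> R) (Q : 'I_T -> matrix R d.+1 d.+1),
  (forall t, 0 < w t) ->
  \sum_t w t = 1 ->
  (forall t, Q t \in SOset R d.+1) ->
  quadrature_exact R d.+1 T nq H w Q ->
  (K <= nq)%N ->
  (* any minimiser of the augmented loss gives an exactly invariant model *)
  forall beta : matrix R[i] m 1,
  (forall beta', L_aug R N d.+1 n m T phi Rp Y w Q beta
                 <= L_aug R N d.+1 n m T phi Rp Y w Q beta') ->
  eps_sym R N d.+1 mu (fexpand R N d.+1 m phi beta) = 0%E.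
Proof.
move=> hs hp hH m mI phi hmI hV hON hexpV hB hexpB hperp n Rp f hRp hf Y A hrank
  T nq w Q hw hw1 hQ hq hKn beta hmin.
pose rot := Defs.rot R N d.+1.
have cpV : forall l, cpoly (phi l) by move=> l; exact: inV_cpoly (hV l).
pose a := fun j : 'I_m => if (j < mI)%N then beta j 0 else 0.
pose b := fun j : 'I_m => if (mI <= j)%N then beta j 0 else 0.
have hab : forall j, beta j 0 = a j + b j.
  by move=> j; rewrite /a /b; case: ltnP => hj; rewrite ?addr0 ?add0r.
have hainv : forall j Q' M, Q' \in SOset R d.+1 -> M \in sphereN R N d.+1 ->
    a j * phi j (rot Q' M) = a j * phi j M.
  move=> j Q' M hQ' hM; rewrite /a; case: ifP => hj; last by rewrite !mul0r.
  by have [_ hI] := hB j hj; rewrite hI.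
pose u := fun t i => \sum_j b j * phi j (rot (Q t) (Rp i)).
pose v := fun i => \sum_j a j * phi j (Rp i).
have hu0 : forall i, \sum_t (w t)%:C * u t i = 0.
  move=> i; rewrite /u.
  rewrite (eq_bigr (fun t => \sum_j b j * ((w t)%:C * phi j (rot (Q t) (Rp i))))); last first.
    by move=> t _; rewrite big_distrr /=; apply: eq_bigr => j _; ring.
  rewrite exchange_big /=; apply: big1 => j _; rewrite -big_distrr /=.
  rewrite /b; case: ifP => hj; last by rewrite mul0r.
  by rewrite (stepA hs hp hH hV hON hB hexpB hw1 hQ hq hKn hj (hRp i)) mulr0.
have hdes : forall t i, (design R N d.+1 n m phi Rp (Q t) *m beta - Y) i 0 =
    (v i - Y i 0) + u t i.
  move=> t i; rewrite !mxE.
  rewrite (eq_bigr (fun j => a j * phi j (rot (Q t) (Rp i)) + b j * phi j (rot (Q t) (Rp i))));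
    last by move=> j _; rewrite mxE hab; ring.
  rewrite big_split /= /v /u (eq_bigr (fun j => a j * phi j (Rp i))); last first.
    by move=> j _; rewrite hainv.
  by ring.
pose beta' : 'M[R[i]]_(m, 1) := \col_j a j.
have hdes' : forall t i, (design R N d.+1 n m phi Rp (Q t) *m beta' - Y) i 0 = v i - Y i 0.
  move=> t i; rewrite !mxE; congr (_ - _).
  rewrite /v; apply: eq_bigr => j _; rewrite !mxE mulrC; exact: hainv.
have hL := hmin beta'.
move: hL; rewrite /L_aug /sqnorm.
under eq_bigr do under eq_bigr do rewrite hdes.
under [X in _ <= _ * X]eq_bigr do under eq_bigr do rewrite hdes'.
rewrite (aug_split _ hu0) => hL.
have hS2 : \sum_t w t * \sum_i sqmod R (u t i) <= 0.
  by move: hL; rewrite ler_pM2l ?invr_gt0 // gerDl.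
have hS : \sum_t w t * \sum_i sqmod R (u t i) = 0.
  apply/eqP; rewrite eq_le hS2 /=.
  by apply: sumr_ge0 => t _; apply: mulr_ge0; [exact: ltW|apply: sumr_ge0 => i _; exact: sqmod_ge0].
have hu : forall t i, u t i = 0.
  move=> t i; apply: sqmod_eq0.
  have ht := psumr_eq0P (fun t _ => mulr_ge0 (ltW (hw t))
     (sumr_ge0 _ (fun i _ => sqmod_ge0 (u t i)))) hS (erefl true : true).
  have ht' : \sum_i sqmod R (u t i) = 0.
    by move/eqP: (ht t); rewrite mulf_eq0 (gt_eqF (hw t)) /= => /eqP.
  exact: (psumr_eq0P (fun i _ => sqmod_ge0 (u t i)) ht').
have [t0 _] : exists t0 : 'I_T, true.
  case: (pickP (@predT 'I_T)) => [t0 _|h]; first by exists t0.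
  by move: hw1; rewrite big_pred0 // => /eqP; rewrite eq_sym oner_eq0.
pose hperpf := fun M => \sum_j b j * phi j M.
have hg : inV R N d.+1 K (fun M => hperpf (rot (Q t0) M)).
  apply: inV_rot (hQ t0) _; exact: inV_lin.
have [c hc] := hexpV _ hg.
pose cc : 'M[R[i]]_(m, 1) := \col_j c j.
have hAc : A *m cc = 0.
  apply/matrixP => i j; rewrite ord1 !mxE.
  rewrite -[RHS](hu t0 i) /u -/(hperpf (rot (Q t0) (Rp i))) hc //.
  apply: eq_bigr => l _; rewrite !mxE /Defs.rot trmx1 mulmx1 mulrC.
  by [].
have hc0 : forall l, c l = 0.
  have hfree : row_free A^T by rewrite /row_free mxrank_tr hrank.
  have : cc^T *m A^T == 0 by rewrite -trmx_mul hAc trmx0.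
  rewrite mulmx_free_eq0 // => /eqP hcc l.
  by move/matrixP: hcc => /(_ 0 l); rewrite !mxE.
have hperp0 : forall M, M \in sphereN R N d.+1 -> hperpf M = 0.
  move=> M hM; rewrite -(rot_inv_sphere M (hQ t0)).
  rewrite -/(rot _ _) hc; last by apply: rot_sphere => //; exact: SO_tr.
  by apply: big1 => l _; rewrite hc0 mul0r.
pose Pa := fun M => \sum_j a j * phi j M.
pose P := fexpand R N d.+1 m phi beta.
have hPe : forall M, M \in sphereN R N d.+1 -> P M = Pa M.
  move=> M hM; rewrite /P /fexpand.
  rewrite (eq_bigr (fun j => a j * phi j M + b j * phi j M)); last first.
    by move=> j _; rewrite hab mulrDl.
  by rewrite big_split /= -/(hperpf M) hperp0 // addr0.
have hPinv : rot_inv R N d.+1 P.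
  move=> Q' M hQ' hM; rewrite hPe ?rot_sphere // hPe //.
  by apply: eq_bigr => j _; exact: hainv.
have hcP : cpoly P.
  rewrite /P /fexpand; apply: cpoly_sum => j; apply: cpoly_mul;
  [exact: cpoly_const|exact: cpV].
have [pr [pi [h1 h2 h3]]] := hcP.
have mS := @sphereN_meas R N d.+1.
have hL2 : inv_L2 R N d.+1 mu P.
  split => //.
  - apply: (eq_measurable_fun (pr : Mx R N d.+1 -> R)).
      by move=> M hM; rewrite h3.
    exact: measurable_funS (ispoly_meas h1).
  - apply: (eq_measurable_fun (pi : Mx R N d.+1 -> R)).
      by move=> M hM; rewrite h3.
    exact: measurable_funS (ispoly_meas h2).
  - rewrite /l2sq; apply: (integrable_lty mS).
    apply: (ispoly_integrable hs hp (p := fun M => pr M * pr M + pi M * pi M)).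
      by apply: ispoly_add; apply: ispoly_mul.
    by move=> M hM; rewrite h3 // /sqmod /= !expr2.
rewrite /eps_sym; apply/eqP; rewrite eq_le; apply/andP; split.
  apply: ereal_inf_lbound; exists P => //.
  rewrite /l2sq (eq_integral (fun=> 0%E)); last first.
    by move=> M _; rewrite subrr /sqmod /= expr0n addr0.
  by rewrite integral0 /= sqrtr0.
apply/ereal_infP => y [h hh <-].
have : (0 <= l2sq R N d.+1 mu (fun M => (P M - h M)%R))%E.
  by apply: integral_ge0 => M _; rewrite lee_fin sqmod_ge0.
by case: (l2sq _ _ _ _ _) => [r| |] //=; rewrite lee_fin sqrtr_ge0.
Qed.
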